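(* Let $\mathrm{F}\colon \mathcal A \rightleftarrows \mathcal B\colon \mathrm{U}$ be an adjunction ($\mathrm F\dashv \mathrm U$, unit $\eta$, counit $\varepsilon$) and let $\mathbb T=(\mathrm{FU},\mathrm F\eta\mathrm U,\varepsilon)$ be the induced comonad on $\mathcal B$. Let $\mathbb C$ be a comonad on $\mathcal A$ and let $\mathbb S$ be a comonad on $\mathcal B$ which is a lift of $\mathbb C$ through $\mathrm F\dashv\mathrm U$, implemented by a natural isomorphism $\Omega\colon \mathrm{CU}\Rightarrow \mathrm{US}$ such that $(\mathrm U,\Omega)$ is a lax morphism of comonads from $\mathbb C$ to $\mathbb S$. Assume moreover: (a) $\mathrm V\colon \mathcal C\rightleftarrows \mathcal B\colon \mathrm G$ is an adjunction ($\mathrm V\dashv \mathrm G$, unit $\eta'$, counit $\varepsilon'$) whose induced comonad on $\mathcal B$ is $\mathbb S$, i.e. $\mathrm S=\mathrm{VG}$, $\Delta^{\mathbb S}=\mathrm V\eta'\mathrm G$, $\varepsilon^{\mathbb S}=\varepsilon'$; (b) $\mathbb Q$ is a comonad on $\mathcal C$ which is an extension of $\mathbb T$ through $\mathrm V\dashv\mathrm G$, i.e. there is a natural isomorphism $\tilde\Omega\colon \mathrm{QG}\Rightarrow \mathrm{GT}$ such that $(\mathrm G,\tilde\Omega)$ is a lax isomorphism of comonads from $\mathbb Q$ to $\mathbb T$; (c) the mate $\tilde\Lambda=\varepsilon'\mathrm{TV}\circ \mathrm V\tilde\Omega\mathrm V\circ \mathrm{VQ}\eta'\colon \mathrm{VQ}\Rightarrow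 \mathrm{TV}$ of $\tilde\Omega$ is a colax isomorphism of comonads from $\mathbb Q$ to $\mathbb T$ (i.e. $(\mathrm V,\tilde\Lambda)$ is a colax morphism of comonads and $\tilde\Lambda$ is invertible). Let $\psi=\tilde\Lambda\mathrm G\circ \mathrm V\tilde\Omega^{-1}\colon \mathrm{ST}=\mathrm{VGT}\Rightarrow \mathrm{TVG}=\mathrm{TS}$ be the induced distributive law of $\mathbb S$ over $\mathbb T$. Then: (1) $\psi$ is a natural isomorphism; and (2) for any category $\mathcal Z$ and functor $\mathrm N\colon\mathcal B\to\mathcal Z$, the left $\psi^{-1}$-coalgebra structures $\lambda$ on $\mathrm N$ (on $\mathcal Z$) are in bijective correspondence with the $\mathbb Q$-opcoalgebra structures on $\mathrm{NV}\colon \mathcal C\to\mathcal Z$.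
   Context: Juxtaposition denotes composition of functors and horizontal composition (whiskering) of natural transformations; $\circ$ denotes vertical composition. A comonad $\mathbb D=(\mathrm D,\Delta^{\mathbb D},\varepsilon^{\mathbb D})$ on a category is an endofunctor with coassociative, counital comultiplication $\Delta^{\mathbb D}\colon \mathrm D\Rightarrow\mathrm{DD}$ and counit $\varepsilon^{\mathbb D}\colon\mathrm D\Rightarrow\mathrm{id}$. For comonads $\mathbb C'$ on $\mathcal C'$ and $\mathbb D$ on $\mathcal D$: a lax morphism from $\mathbb C'$ to $\mathbb D$ is a pair $(\mathrm G,\sigma)$ with $\mathrm G\colon\mathcal D\to\mathcal C'$, $\sigma\colon \mathrm C'\mathrm G\Rightarrow \mathrm{GD}$ satisfying $\mathrm G\Delta^{\mathbb D}\circ\sigma=\sigma\mathrm D\circ \mathrm C'\sigma\circ\Delta^{\mathbb C'}\mathrm G$ and $\mathrm G\varepsilon^{\mathbb D}\circ\sigma=\varepsilon^{\mathbb C'}\mathrm G$; a colax morphism is a pair $(\mathrm F,\tau)$ with $\mathrm F\colon\mathcal C'\to\mathcal D$, $\tau\colon\mathrm F\mathrm C'\Rightarrow\mathrm{DF}$ satisfying $\Delta^{\mathbb D}\mathrm F\circ\tau=\mathrm D\tau\circ\tau\mathrm C'\circ \mathrm F\Delta^{\mathbb C'}$ and $\varepsilon^{\mathbb D}\mathrm F\circ\tau=\mathrm F\varepsilon^{\mathbb C'}$; it is a (co)lax isomorphism if the natural transformation is invertible. The mate of a natural transformation $\Omega\colon \mathrm{CU}\Rightarrow\mathrm{US}$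 under $\mathrm F\dashv\mathrm U$ is $\Lambda=\varepsilon\mathrm{SF}\circ\mathrm F\Omega\mathrm F\circ\mathrm{FC}\eta\colon\mathrm{FC}\Rightarrow\mathrm{SF}$. If $\chi\colon \mathrm{TS}\Rightarrow\mathrm{ST}$ is a natural transformation between comonads $\mathbb T,\mathbb S$ on $\mathcal B$, a left $\chi$-coalgebra on $\mathcal Z$ is a functor $\mathrm N\colon\mathcal B\to\mathcal Z$ with a natural transformation $\lambda\colon\mathrm{NS}\Rightarrow\mathrm{NT}$ such that $\mathrm N\Delta^{\mathbb T}\circ\lambda=\lambda\mathrm T\circ\mathrm N\chi\circ\lambda\mathrm S\circ\mathrm N\Delta^{\mathbb S}$ and $\mathrm N\varepsilon^{\mathbb T}\circ\lambda=\mathrm N\varepsilon^{\mathbb S}$; here this is applied with $\chi=\psi^{-1}\colon\mathrm{TS}\Rightarrow\mathrm{ST}$. A $\mathbb Q$-opcoalgebra structure on a functor $\mathrm P\colon\mathcal C\to\mathcal Z$ is a natural transformation $\nabla\colon\mathrm P\Rightarrow\mathrm{PQ}$ with $\mathrm P\Delta^{\mathbb Q}\circ\nabla=\nabla\mathrm Q\circ\nabla$ and $\mathrm P\varepsilon^{\mathbb Q}\circ\nabla=\mathrm{id}_{\mathrm P}$. *)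

(* Defs.v *)
Set Implicit Arguments.
Unset Strict Implicit.

Record Category := {
  Obj :> Type;
  Hom : Obj -> Obj -> Type;
  idm : forall a, Hom a a;
  comp : forall x y z, Hom y z -> Hom x y -> Hom x z;
  comp_id_l : forall a b (f : Hom a b), comp (idm b) f = f;
  comp_id_r : forall a b (f : Hom a b), comp f (idm a) = f;
  comp_assoc : forall a b c d (h : Hom c d) (g : Hom b c) (f : Hom a b),
      comp h (comp g f) = comp (comp h g) f }.

Arguments Hom {_} _ _.
Arguments idm {_} _.
Arguments comp {_ _ _ _} _ _.

Notation "g ∘ f" := (comp g f) (at level 40, left associativity).

Record Functor (A B : Category) := {
  fobj :> A -> B;
  fmap : forall a b : A, Hom a b -> Hom (fobj a) (fobj b);
  fmap_id : forall a, fmap (idm a) = idm (fobj a);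
  fmap_comp : forall (a b c : A) (g : Hom b c) (f : Hom a b),
      fmap (g ∘ f) = fmap g ∘ fmap f }.

Arguments fmap {_ _} _ {_ _} _.

Unset Implicit Arguments.

Definition Fcomp {A B C : Category} (G : Functor B C) (F : Functor A B) : Functor A C.
Proof.
  refine {| fobj := fun a => G (F a); fmap := fun a b f => fmap G (fmap F f) |}.
  - intros a. rewrite !fmap_id. reflexivity.
  - intros a b c g f. rewrite !fmap_comp. reflexivity.
Defined.

Definition Fid (A : Category) : Functor A A.
Proof.
  refine {| fobj := fun a => a; fmap := fun a b f => f |}; reflexivity.
Defined.

Definition is_natural {A B : Category} (F G : Functor A B)
  (alpha : forall a : A, Hom (F a) (G a)) : Prop :=
  forall (a b : A) (f : Hom a b), fmap G f ∘ alpha a = alpha b ∘ fmap F f.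

Definition is_inverse {A B : Category} (F G : Functor A B)
  (alpha : forall a : A, Hom (F a) (G a)) (beta : forall a : A, Hom (G a) (F a)) : Prop :=
  forall a, beta a ∘ alpha a = idm (F a) /\ alpha a ∘ beta a = idm (G a).

Definition is_natural_iso {A B : Category} (F G : Functor A B)
  (alpha : forall a : A, Hom (F a) (G a)) : Prop :=
  is_natural F G alpha /\
  forall a, exists b : Hom (G a) (F a), b ∘ alpha a = idm (F a) /\ alpha a ∘ b = idm (G a).

Definition is_adjunction {A B : Category} (F : Functor A B) (U : Functor B A)
  (eta : forall a : A, Hom a (U (F a))) (eps : forall b : B, Hom (F (U b)) b) : Prop :=
  is_natural (Fid A) (Fcomp U F) eta /\
  is_natural (Fcomp F U) (Fid B) eps /\
  (forall a : A, eps (F a) ∘ fmap F (eta a) = idm (F a)) /\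
  (forall b : B, fmap U (eps b) ∘ eta (U b) = idm (U b)).

Definition is_comonad {A : Category} (D : Functor A A)
  (Delta : forall a : A, Hom (D a) (D (D a))) (epsD : forall a : A, Hom (D a) a) : Prop :=
  is_natural D (Fcomp D D) Delta /\
  is_natural D (Fid A) epsD /\
  (forall a, fmap D (Delta a) ∘ Delta a = Delta (D a) ∘ Delta a) /\
  (forall a, epsD (D a) ∘ Delta a = idm (D a)) /\
  (forall a, fmap D (epsD a) ∘ Delta a = idm (D a)).

Definition lax_morphism {A' B' : Category}
  (C' : Functor A' A') (DeltaC : forall a, Hom (C' a) (C' (C' a))) (epsC : forall a, Hom (C' a) a)
  (D : Functor B' B') (DeltaD : forall b, Hom (D b) (D (D b))) (epsD : forall b, Hom (D b) b)
  (G : Functor B' A') (sigma : forall b : B', Hom (C' (G b)) (G (D b))) : Prop :=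
  is_natural (Fcomp C' G) (Fcomp G D) sigma /\
  (forall b, fmap G (DeltaD b) ∘ sigma b
             = sigma (D b) ∘ fmap C' (sigma b) ∘ DeltaC (G b)) /\
  (forall b, fmap G (epsD b) ∘ sigma b = epsC (G b)).

Definition colax_morphism {A' B' : Category}
  (C' : Functor A' A') (DeltaC : forall a, Hom (C' a) (C' (C' a))) (epsC : forall a, Hom (C' a) a)
  (D : Functor B' B') (DeltaD : forall b, Hom (D b) (D (D b))) (epsD : forall b, Hom (D b) b)
  (F : Functor A' B') (tau : forall a : A', Hom (F (C' a)) (D (F a))) : Prop :=
  is_natural (Fcomp F C') (Fcomp D F) tau /\
  (forall a, DeltaD (F a) ∘ tau a
             = fmap D (tau a) ∘ tau (C' a) ∘ fmap F (DeltaC a)) /\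
  (forall a, epsD (F a) ∘ tau a = fmap F (epsC a)).

(* Comonad induced by an adjunction F -| U on the codomain of F:
   (FU, F eta U, eps) *)
Definition ind_Delta {A B : Category} (F : Functor A B) (U : Functor B A)
  (eta : forall a : A, Hom a (U (F a))) (b : B)
  : Hom (Fcomp F U b) (Fcomp F U (Fcomp F U b)) :=
  fmap F (eta (U b)).

Definition mate {Cc B : Category} (V : Functor Cc B) (G : Functor B Cc)
  (eta' : forall c : Cc, Hom c (G (V c))) (eps' : forall b : B, Hom (V (G b)) b)
  (Q : Functor Cc Cc) (T : Functor B B)
  (Omt : forall b : B, Hom (Q (G b)) (G (T b))) (c : Cc) : Hom (V (Q c)) (T (V c)) :=
  eps' (T (V c)) ∘ fmap V (Omt (V c)) ∘ fmap V (fmap Q (eta' c)).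

Definition psi_law {Cc B : Category} (V : Functor Cc B) (G : Functor B Cc)
  (Q : Functor Cc Cc) (T : Functor B B)
  (Lam : forall c : Cc, Hom (V (Q c)) (T (V c)))
  (Omtinv : forall b : B, Hom (G (T b)) (Q (G b))) (b : B)
  : Hom (Fcomp V G (T b)) (T (Fcomp V G b)) :=
  Lam (G b) ∘ fmap V (Omtinv b).

Definition is_left_coalg {B Z : Category}
  (T : Functor B B) (DeltaT : forall b, Hom (T b) (T (T b))) (epsT : forall b, Hom (T b) b)
  (S : Functor B B) (DeltaS : forall b, Hom (S b) (S (S b))) (epsS : forall b, Hom (S b) b)
  (chi : forall b, Hom (T (S b)) (S (T b)))
  (N : Functor B Z) (lam : forall b, Hom (N (S b)) (N (T b))) : Prop :=
  is_natural (Fcomp N S) (Fcomp N T) lam /\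
  (forall b, fmap N (DeltaT b) ∘ lam b
             = lam (T b) ∘ fmap N (chi b) ∘ lam (S b) ∘ fmap N (DeltaS b)) /\
  (forall b, fmap N (epsT b) ∘ lam b = fmap N (epsS b)).

Definition is_opcoalg {Cc Z : Category}
  (Q : Functor Cc Cc) (DeltaQ : forall c, Hom (Q c) (Q (Q c))) (epsQ : forall c, Hom (Q c) c)
  (P : Functor Cc Z) (nabla : forall c, Hom (P c) (P (Q c))) : Prop :=
  is_natural P (Fcomp P Q) nabla /\
  (forall c, fmap P (DeltaQ c) ∘ nabla c = nabla (Q c) ∘ nabla c) /\
  (forall c, fmap P (epsQ c) ∘ nabla c = idm (P c)).

Definition in_bijection (X Y : Type) : Prop :=
  exists (f : X -> Y) (g : Y -> X),
    (forall x, g (f x) = x) /\ (forall y, f (g y) = y).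

(* Main.v *)
Require Import Defs.
From Stdlib Require Import ClassicalEpsilon FunctionalExtensionality ProofIrrelevance.

Lemma arw {C : Category} {a b c d : C} (f : Hom c d) (g : Hom b c) (h : Hom b d) (x : Hom a b) :
  f ∘ g = h -> f ∘ (g ∘ x) = h ∘ x.
Proof. intros E. rewrite comp_assoc, E. reflexivity. Qed.

Lemma arw3 {C : Category} {a b c d e : C} (f : Hom d e) (g : Hom c d) (k : Hom b c) (h : Hom b e) (x : Hom a b) :
  f ∘ (g ∘ k) = h -> f ∘ (g ∘ (k ∘ x)) = h ∘ x.
Proof. intros E. rewrite (comp_assoc g k x), (comp_assoc f (g ∘ k) x), E. reflexivity. Qed.

Lemma fmap2 {A B : Category} (H : Functor A B) {a b c : A} (g : Hom b c) (f : Hom a b) (h : Hom a c) :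
  g ∘ f = h -> fmap H g ∘ fmap H f = fmap H h.
Proof. intros E. rewrite <- fmap_comp, E. reflexivity. Qed.

Lemma fmap_idE {A B : Category} (H : Functor A B) {a : A} (g : Hom a a) :
  g = idm a -> fmap H g = idm (H a).
Proof. intros E. rewrite E, fmap_id. reflexivity. Qed.

Theorem theorem1p1
  (A B Cc : Category)
  (* adjunction F -| U, induced comonad T = (FU, F eta U, eps) on B *)
  (F : Functor A B) (U : Functor B A)
  (eta : forall a : A, Hom a (U (F a))) (eps : forall b : B, Hom (F (U b)) b)
  (HFU : is_adjunction F U eta eps)
  (* comonad C on A *)
  (Cm : Functor A A) (DeltaC : forall a : A, Hom (Cm a) (Cm (Cm a)))
  (epsC : forall a : A, Hom (Cm a) a)
  (HC : is_comonad Cm DeltaC epsC)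
  (* (a) adjunction V -| G whose induced comonad on B is S = (VG, V eta' G, eps') *)
  (V : Functor Cc B) (G : Functor B Cc)
  (eta' : forall c : Cc, Hom c (G (V c))) (eps' : forall b : B, Hom (V (G b)) b)
  (HVG : is_adjunction V G eta' eps')
  (* S is a lift of C through F -| U via the natural iso Omega : CU => US *)
  (Om : forall b : B, Hom (Cm (U b)) (U (Fcomp V G b)))
  (HOm_iso : is_natural_iso (Fcomp Cm U) (Fcomp U (Fcomp V G)) Om)
  (HOm_lax : lax_morphism Cm DeltaC epsC (Fcomp V G) (ind_Delta V G eta') eps' U Om)
  (* (b) comonad Q on Cc, extension of T through V -| G via Omega~ : QG => GT *)
  (Q : Functor Cc Cc) (DeltaQ : forall c : Cc, Hom (Q c) (Q (Q c)))
  (epsQ : forall c : Cc, Hom (Q c) c)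
  (HQ : is_comonad Q DeltaQ epsQ)
  (Omt : forall b : B, Hom (Q (G b)) (G (Fcomp F U b)))
  (Omtinv : forall b : B, Hom (G (Fcomp F U b)) (Q (G b)))
  (HOmt_inv : is_inverse (Fcomp Q G) (Fcomp G (Fcomp F U)) Omt Omtinv)
  (HOmt_lax : lax_morphism Q DeltaQ epsQ (Fcomp F U) (ind_Delta F U eta) eps G Omt)
  (* (c) the mate of Omega~ is a colax isomorphism from Q to T *)
  (HLam_colax : colax_morphism Q DeltaQ epsQ (Fcomp F U) (ind_Delta F U eta) eps V
                  (mate V G eta' eps' Q (Fcomp F U) Omt))
  (HLam_iso : forall c : Cc, exists l : Hom (Fcomp F U (V c)) (V (Q c)),
                 l ∘ mate V G eta' eps' Q (Fcomp F U) Omt c = idm (V (Q c)) /\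
                 mate V G eta' eps' Q (Fcomp F U) Omt c ∘ l = idm (Fcomp F U (V c))) :
  let psi := psi_law V G Q (Fcomp F U) (mate V G eta' eps' Q (Fcomp F U) Omt) Omtinv in
  (* (1) psi : ST => TS is a natural isomorphism *)
  is_natural_iso (Fcomp (Fcomp V G) (Fcomp F U)) (Fcomp (Fcomp F U) (Fcomp V G)) psi /\
  (* (2) left psi^{-1}-coalgebra structures on N  <->  Q-opcoalgebra structures on NV *)
  (forall (Z : Category) (N : Functor B Z)
          (psiinv : forall b : B, Hom (Fcomp F U (Fcomp V G b)) (Fcomp V G (Fcomp F U b))),
      is_inverse (Fcomp (Fcomp V G) (Fcomp F U)) (Fcomp (Fcomp F U) (Fcomp V G)) psi psiinv ->
      in_bijection
        { lam : forall b : B, Hom (N (Fcomp V G b)) (N (Fcomp F U b)) |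
            is_left_coalg (Fcomp F U) (ind_Delta F U eta) eps (Fcomp V G) (ind_Delta V G eta') eps' psiinv N lam }
        { nabla : forall c : Cc, Hom (Fcomp N V c) (Fcomp N V (Q c)) |
            is_opcoalg Q DeltaQ epsQ (Fcomp N V) nabla }).

Proof.
  intros psi.
  destruct HFU as [Heta [Heps [HtriF HtriU]]].
  destruct HVG as [Heta' [Heps' [HtriV HtriG]]].
  destruct HOmt_lax as [HOmt_nat [HOmt_D HOmt_e]].
  destruct HLam_colax as [HLam_nat [HLam_D HLam_e]].
  set (Lam := mate V G eta' eps' Q (Fcomp F U) Omt) in *.
  unfold is_natural in *. simpl in *.
  pose (Li := fun c => proj1_sig (constructive_indefinite_description _ (HLam_iso c))).
  assert (HLi : forall c, Li c ∘ Lam c = idm _ /\ Lam c ∘ Li c = idm _).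
  { intros c. unfold Li. destruct (constructive_indefinite_description _ (HLam_iso c)) as [l Hl]. exact Hl. }
  clearbody Li. clear HLam_iso.
  assert (HOi_nat : forall (a b : B) (f : Hom a b),
     fmap Q (fmap G f) ∘ Omtinv a = Omtinv b ∘ fmap G (fmap F (fmap U f))).
  { intros a b f. destruct (HOmt_inv a) as [Ha1 Ha2]. destruct (HOmt_inv b) as [Hb1 Hb2].
    simpl in *.
    rewrite <- (comp_id_l (fmap Q (fmap G f) ∘ Omtinv a)), <- Hb1.
    rewrite <- !comp_assoc, (comp_assoc (Omt b)), <- HOmt_nat, <- comp_assoc, Ha2, comp_id_r.
    reflexivity. }
  assert (HLi_nat : forall (a b : Cc) (f : Hom a b),
     fmap V (fmap Q f) ∘ Li a = Li b ∘ fmap F (fmap U (fmap V f))).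
  { intros a b f. destruct (HLi a) as [Ha1 Ha2]. destruct (HLi b) as [Hb1 Hb2].
    rewrite <- (comp_id_l (fmap V (fmap Q f) ∘ Li a)), <- Hb1.
    rewrite <- !comp_assoc, (comp_assoc (Lam b)), <- HLam_nat, <- comp_assoc, Ha2, comp_id_r.
    reflexivity. }
  split.
  { split.
    - intros a b f. simpl. unfold psi, psi_law.
      rewrite comp_assoc, HLam_nat, <- !comp_assoc. f_equal. rewrite <- !fmap_comp. f_equal. apply HOi_nat.
    - intros b. exists (fmap V (Omt b) ∘ Li (G b)). unfold psi, psi_law. simpl.
      destruct (HLi (G b)) as [H1 H2]. destruct (HOmt_inv b) as [H3 H4]. simpl in *.
      split.
      + rewrite <- comp_assoc, (comp_assoc (Li (G b))), H1, comp_id_l, <- fmap_comp, H4, fmap_id. reflexivity.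
      + rewrite <- comp_assoc, (comp_assoc (fmap V (Omtinv b))), <- fmap_comp, H3, fmap_id, comp_id_l, H2. reflexivity. }
  assert (K1 : forall b, eps' (F (U b)) ∘ fmap V (Omt b) = fmap F (fmap U (eps' b)) ∘ Lam (G b)).
  { intros b. unfold Lam, mate. simpl.
    rewrite !comp_assoc, Heps', <- !comp_assoc. f_equal.
    rewrite <- !fmap_comp, comp_assoc, HOmt_nat, <- comp_assoc, <- fmap_comp, HtriG, fmap_id, comp_id_r.
    reflexivity. }
  assert (K2 : forall c, fmap G (Lam c) ∘ eta' (Q c) = Omt (V c) ∘ fmap Q (eta' c)).
  { intros c. unfold Lam, mate. simpl.
    rewrite !fmap_comp, <- !comp_assoc, Heta', (comp_assoc (fmap G (fmap V (Omt (V c))))), Heta'.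
    rewrite !comp_assoc, HtriG, comp_id_l. reflexivity. }
  intros Z N psiinv Hpi.
  assert (chi1 : forall b, psiinv b ∘ Lam (G b) = fmap V (Omt b)).
  { intros b. destruct (Hpi b) as [H1 H2]. destruct (HOmt_inv b) as [H3 H4]. simpl in *.
    unfold psi, psi_law in H1. simpl in H1. rewrite comp_assoc in H1.
    rewrite <- (comp_id_r (Lam (G b))), <- fmap_id, <- H3, fmap_comp, !comp_assoc, H1, comp_id_l.
    reflexivity. }
  assert (chi2 : forall c, fmap V (fmap G (Lam c)) ∘ fmap V (eta' (Q c))
            = psiinv (V c) ∘ fmap F (fmap U (fmap V (eta' c))) ∘ Lam c).
  { intros c. rewrite <- comp_assoc, HLam_nat, comp_assoc, chi1, <- !fmap_comp, K2. reflexivity. }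
  pose (Phi := fun (nab : forall c : Cc, Hom (N (V c)) (N (V (Q c)))) (b : B) =>
      fmap N (eps' (F (U b)) ∘ fmap V (Omt b)) ∘ nab (G b)).
  pose (Psi := fun (lam : forall b : B, Hom (N (V (G b))) (N (F (U b)))) (c : Cc) =>
      fmap N (Li c) ∘ lam (V c) ∘ fmap N (fmap V (eta' c))).
  assert (RT1 : forall lam, (forall a b (f : Hom a b), fmap N (fmap F (fmap U f)) ∘ lam a = lam b ∘ fmap N (fmap V (fmap G f))) ->
      forall b, Phi (Psi lam) b = lam b).
  { intros lam Hn b. unfold Phi, Psi.
    rewrite !comp_assoc, <- fmap_comp, <- comp_assoc, K1, <- comp_assoc, (proj2 (HLi _)), comp_id_r.
    rewrite comp_assoc, Hn, <- comp_assoc, <- !fmap_comp, HtriG, !fmap_id, comp_id_r. reflexivity. }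
  assert (RT2 : forall nab, (forall a b (f : Hom a b), fmap N (fmap V (fmap Q f)) ∘ nab a = nab b ∘ fmap N (fmap V f)) ->
      forall c, Psi (Phi nab) c = nab c).
  { intros nab Hn c. unfold Phi, Psi.
    rewrite <- !comp_assoc, <- Hn, !comp_assoc, <- !fmap_comp.
    replace (Li c ∘ (eps' (F (U (V c))) ∘ fmap V (Omt (V c))) ∘ fmap V (fmap Q (eta' c))) with (Li c ∘ Lam c)
      by (unfold Lam, mate; simpl; rewrite !comp_assoc; reflexivity).
    rewrite (proj1 (HLi c)), fmap_id, comp_id_l. reflexivity. }
  assert (PhiOK : forall nab, is_opcoalg Q DeltaQ epsQ (Fcomp N V) nab ->
     is_left_coalg (Fcomp F U) (ind_Delta F U eta) eps (Fcomp V G) (ind_Delta V G eta') eps' psiinv N (Phi nab)).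
  { intros nab [Hn [HD He]]. unfold is_natural, ind_Delta in *. simpl in *.
    unfold is_left_coalg, is_natural, ind_Delta. simpl.
    split; [|split].
    - intros a b f. unfold Phi; simpl.
      rewrite comp_assoc, <- fmap_comp, <- comp_assoc, <- Hn, (comp_assoc (fmap N (eps' (F (U b)) ∘ fmap V (Omt b)))), <- fmap_comp.
      f_equal. f_equal.
      rewrite comp_assoc, Heps', <- !comp_assoc, <- fmap_comp, HOmt_nat, fmap_comp. reflexivity.
    - intros b.
      assert (stepA : Phi nab (V (G b)) ∘ fmap N (fmap V (eta' (G b))) = fmap N (Lam (G b)) ∘ nab (G b)).
      { unfold Phi; simpl. rewrite <- comp_assoc, <- Hn, comp_assoc, <- fmap_comp.
        reflexivity. }
      assert (stepC : Phi nab (F (U b)) ∘ fmap N (fmap V (Omt b)) = fmap N (eps' (F (U (F (U b)))) ∘ fmap V (Omt (F (U b))) ∘ fmap V (fmap Q (Omt b))) ∘ nab (Q (G b))).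
      { unfold Phi; simpl. rewrite <- comp_assoc, <- Hn, comp_assoc, <- fmap_comp. reflexivity. }
      assert (stepE : fmap F (eta (U b)) ∘ (eps' (F (U b)) ∘ fmap V (Omt b)) = eps' (F (U (F (U b)))) ∘ fmap V (Omt (F (U b))) ∘ fmap V (fmap Q (Omt b)) ∘ fmap V (DeltaQ (G b))).
      { unfold ind_Delta in HOmt_D. simpl in HOmt_D.
        rewrite comp_assoc, Heps', <- !comp_assoc. f_equal. rewrite <- !fmap_comp. f_equal.
        rewrite HOmt_D, comp_assoc. reflexivity. }
      transitivity (fmap N (eps' (F (U (F (U b)))) ∘ fmap V (Omt (F (U b))) ∘ fmap V (fmap Q (Omt b)) ∘ fmap V (DeltaQ (G b))) ∘ nab (G b)).
      { unfold Phi; simpl. rewrite comp_assoc, <- fmap_comp, stepE. reflexivity. }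
      rewrite fmap_comp, <- comp_assoc, HD.
      symmetry. rewrite <- !comp_assoc, stepA, (comp_assoc (fmap N (psiinv b))), <- fmap_comp, chi1, comp_assoc, stepC, <- comp_assoc.
      rewrite !comp_assoc. reflexivity.
    - intros b. unfold Phi; simpl. rewrite comp_assoc, <- fmap_comp.
      replace (eps b ∘ (eps' (F (U b)) ∘ fmap V (Omt b))) with (eps' b ∘ fmap V (epsQ (G b)))
        by (rewrite comp_assoc, Heps', <- comp_assoc, <- fmap_comp, HOmt_e; reflexivity).
      rewrite fmap_comp, <- comp_assoc, He, comp_id_r. reflexivity. }
  assert (PsiOK : forall lam, is_left_coalg (Fcomp F U) (ind_Delta F U eta) eps (Fcomp V G) (ind_Delta V G eta') eps' psiinv N lam ->
     is_opcoalg Q DeltaQ epsQ (Fcomp N V) (Psi lam)).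
  { intros lam [Hn [HD He]]. unfold is_natural, ind_Delta in *. simpl in *.
    unfold is_opcoalg, is_natural. simpl.
    split; [|split].
    - intros a b f. unfold Psi; simpl.
      rewrite <- !comp_assoc, (comp_assoc (fmap N (fmap V (fmap Q f)))), <- fmap_comp, HLi_nat, fmap_comp, <- comp_assoc.
      rewrite (comp_assoc (fmap N (fmap F (fmap U (fmap V f))))), Hn, <- comp_assoc, <- !fmap_comp, Heta'.
      reflexivity.
    - intros c.
      assert (CD : fmap V (DeltaQ c) ∘ Li c = Li (Q c) ∘ fmap F (fmap U (Li c)) ∘ fmap F (eta (U (V c)))).
      { transitivity (Li (Q c) ∘ fmap F (fmap U (Li c)) ∘ (fmap F (fmap U (Lam c)) ∘ Lam (Q c) ∘ fmap V (DeltaQ c)) ∘ Li c).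
        - rewrite <- !comp_assoc, (comp_assoc (fmap F (fmap U (Li c)))), <- fmap_comp, <- fmap_comp, (proj1 (HLi _)), !fmap_id, comp_id_l.
          rewrite comp_assoc, (proj1 (HLi _)), comp_id_l. reflexivity.
        - rewrite <- HLam_D. unfold ind_Delta. rewrite <- !comp_assoc, (proj2 (HLi _)), comp_id_r. reflexivity. }
      assert (CDN : fmap N (fmap V (DeltaQ c)) ∘ fmap N (Li c) = fmap N (Li (Q c)) ∘ fmap N (fmap F (fmap U (Li c))) ∘ fmap N (fmap F (eta (U (V c))))).
      { rewrite <- !fmap_comp, CD. reflexivity. }
      assert (SI : fmap V (fmap G (Li c)) ∘ (psiinv (V c) ∘ fmap F (fmap U (fmap V (eta' c)))) = fmap V (eta' (Q c)) ∘ Li c).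
      { transitivity (fmap V (fmap G (Li c)) ∘ (psiinv (V c) ∘ fmap F (fmap U (fmap V (eta' c))) ∘ Lam c) ∘ Li c).
        - rewrite <- !comp_assoc, (proj2 (HLi _)), comp_id_r. reflexivity.
        - rewrite <- chi2, !comp_assoc, <- fmap_comp, <- fmap_comp, <- (fmap_comp G (Li c)), (proj1 (HLi _)), fmap_id, comp_id_l. reflexivity. }
      assert (SIN : fmap N (fmap V (fmap G (Li c))) ∘ (fmap N (psiinv (V c)) ∘ fmap N (fmap F (fmap U (fmap V (eta' c))))) = fmap N (fmap V (eta' (Q c))) ∘ fmap N (Li c)).
      { rewrite <- !fmap_comp, SI. reflexivity. }
      assert (E3 : fmap N (fmap V (eta' (G (V c)))) ∘ fmap N (fmap V (eta' c)) = fmap N (fmap V (fmap G (fmap V (eta' c)))) ∘ fmap N (fmap V (eta' c))).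
      { rewrite <- !fmap_comp, Heta'. reflexivity. }
      unfold Psi; simpl. rewrite <- !comp_assoc.
      rewrite (arw _ _ _ _ CDN), <- !comp_assoc.
      rewrite (arw _ _ _ _ (HD (V c))), <- !comp_assoc.
      rewrite (arw _ _ _ _ (Hn _ _ (Li c))), <- !comp_assoc.
      rewrite E3, (arw _ _ _ _ (eq_sym (Hn _ _ (fmap V (eta' c))))), <- !comp_assoc.
      rewrite (arw3 _ _ _ _ _ SIN), <- !comp_assoc.
      reflexivity.
    - intros c. unfold Psi; simpl.
      rewrite !comp_assoc, <- fmap_comp.
      replace (fmap V (epsQ c) ∘ Li c) with (eps (V c))
        by (rewrite <- HLam_e, <- comp_assoc, (proj2 (HLi c)), comp_id_r; reflexivity).
      rewrite He, <- fmap_comp, HtriV, fmap_id. reflexivity. }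
  exists (fun x => exist _ (Psi (proj1_sig x)) (PsiOK _ (proj2_sig x))).
  exists (fun y => exist _ (Phi (proj1_sig y)) (PhiOK _ (proj2_sig y))).
  split.
  - intros [lam Hl]. simpl.
    assert (E : Phi (Psi lam) = lam).
    { apply functional_extensionality_dep. intros b. apply RT1.
      destruct Hl as [Hn _]. unfold is_natural in Hn. simpl in Hn. exact Hn. }
    generalize (PhiOK (Psi lam) (PsiOK lam Hl)). rewrite E. intros p.
    f_equal. apply proof_irrelevance.
  - intros [nab Hl]. simpl.
    assert (E : Psi (Phi nab) = nab).
    { apply functional_extensionality_dep. intros c. apply RT2.
      destruct Hl as [Hn _]. unfold is_natural in Hn. simpl in Hn. exact Hn. }
    generalize (PsiOK (Phi nab) (PhiOK nab Hl)). rewrite E. intros p.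
    f_equal. apply proof_irrelevance.
Qed.
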